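(* Let $A$ be a physical system of dimension $m$ whose Hamiltonian has a non-degenerate Bohr spectrum, with energy eigenbasis $\{|x\rangle\}$, and let $\gamma^A$ be its Gibbs state, with diagonal vector $\mathbf{g}$. Let $\rho=\sum_{x,y}r_{xy}|x\rangle\langle y|$ and $\sigma=\sum_{x,y}s_{xy}|x\rangle\langle y|$ be states on $A$ with $r_{xy}\neq0$ for all $x\neq y$, and let $\mathbf{r}=(r_{xx})_x$, $\mathbf{s}=(s_{xx})_x$. Then there exists $\mathcal{E}\in\mathrm{GPC}(A\to A)$ with $\mathcal{E}(\rho)=\sigma$ if and only if there exists an $m\times m$ column stochastic matrix $P=(p_{y|x})$ (entry in row $y$, column $x$) such that $P\mathbf{r}=\mathbf{s}$, $P\mathbf{g}=\mathbf{g}$, and $$\sum_{x=1}^m p_{x|x}|x\rangle\langle x|+\sum_{x\neq y\in[m]}\frac{s_{xy}}{r_{xy}}|x\rangle\langle y|\geq0.$$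
   Context: The Hamiltonian $H^A=\sum_x a_x|x\rangle\langle x|$ has a non-degenerate Bohr spectrum if for all $x,y,x',y'$: $a_x-a_y=a_{x'}-a_{y'}$ holds iff ($x=x'$ and $y=y'$) or ($x=y$ and $x'=y'$). For fixed inverse temperature $\beta>0$ the Gibbs state is $\gamma^A=e^{-\beta H^A}/\mathrm{Tr}[e^{-\beta H^A}]$. $\mathrm{GPC}(A\to A)$ is the set of quantum channels $\mathcal{E}:A\to A$ with $\mathcal{E}(\gamma^A)=\gamma^A$ and $\mathcal{E}(e^{-iH^At}\rho e^{iH^At})=e^{-iH^At}\mathcal{E}(\rho)e^{iH^At}$ for all $t\in\mathbb{R}$ and states $\rho$. *)

(* Defs.v *)
From HB Require Import structures.
From mathcomp Require Import all_boot all_order all_algebra.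
From mathcomp Require Import all_classical all_reals.
From mathcomp Require Import sequences exp trigo.
From mathcomp Require Import complex.
Set Implicit Arguments. Unset Strict Implicit. Unset Printing Implicit Defensive.
Import Order.TTheory GRing.Theory Num.Theory.
Local Open Scope ring_scope.
Local Open Scope complex_scope.

Section QDefs.
Variable R : realType.
Local Notation C := R[i].

Definition adjmx m n (A : 'M[C]_(m, n)) : 'M[C]_(n, m) := (map_mx conjc A)^T.

(* positive semidefinite: Hermitian and <v, A v> >= 0 for all v
   (in the order of C, 0 <= z means z is real and nonnegative) *)
Definition psd m (A : 'M[C]_m) : Prop :=
  adjmx A = A /\ forall v : 'cV[C]_m, 0 <= (adjmx v *m A *m v) ord0 ord0.

Definition is_state m (rho : 'M[C]_m) : Prop := psd rho /\ \tr rho = 1.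

(* positivity of a k x k block matrix with m x m blocks X i j, i.e. of an
   element of M_k(C) (x) M_m(C) *)
Definition block_psd k m (X : 'I_k -> 'I_k -> 'M[C]_m) : Prop :=
  (forall i j, adjmx (X i j) = X j i) /\
  forall v : 'I_k -> 'cV[C]_m,
    0 <= \sum_(i < k) \sum_(j < k) (adjmx (v i) *m X i j *m v j) ord0 ord0.

Definition completely_positive m (E : 'M[C]_m -> 'M[C]_m) : Prop :=
  forall (k : nat) (X : 'I_k -> 'I_k -> 'M[C]_m),
    block_psd X -> block_psd (fun i j => E (X i j)).

Definition is_channel m (E : 'M[C]_m -> 'M[C]_m) : Prop :=
  linear E /\ completely_positive E /\ forall X, \tr (E X) = \tr X.

(* Hamiltonian H = sum_x a_x |x><x| with non-degenerate Bohr spectrum *)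
Definition nondeg_bohr m (a : 'I_m -> R) : Prop :=
  forall x y x' y' : 'I_m,
    a x - a y = a x' - a y' <-> ((x = x' /\ y = y') \/ (x = y /\ x' = y')).

Definition partition_fun m (a : 'I_m -> R) (beta : R) : R :=
  \sum_(x < m) expR (- beta * a x).

Definition gibbs m (a : 'I_m -> R) (beta : R) : 'M[C]_m :=
  \matrix_(x, y) if x == y then (expR (- beta * a x) / partition_fun a beta)%:C
                 else 0.

(* e^{-i H t} for diagonal H : entries e^{-i a_x t} = cos(a_x t) - i sin(a_x t) *)
Definition evol m (a : 'I_m -> R) (t : R) : 'M[C]_m :=
  \matrix_(x, y) if x == y then cos (a x * t) -i* sin (a x * t) else 0.

Definition evol_inv m (a : 'I_m -> R) (t : R) : 'M[C]_m :=
  \matrix_(x, y) if x == y then cos (a x * t) +i* sin (a x * t) else 0.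

Definition GPC m (a : 'I_m -> R) (beta : R) (E : 'M[C]_m -> 'M[C]_m) : Prop :=
  is_channel E /\ E (gibbs a beta) = gibbs a beta /\
  forall (t : R) (rho : 'M[C]_m), is_state rho ->
    E (evol a t *m rho *m evol_inv a t) = evol a t *m E rho *m evol_inv a t.

Definition col_stochastic m (P : 'M[C]_m) : Prop :=
  (forall y x, 0 <= P y x) /\ (forall x, \sum_(y < m) P y x = 1).

Definition diagv m (A : 'M[C]_m) : 'cV[C]_m := \col_x A x x.

End QDefs.

(* Main.v *)
Require Import Defs.
From HB Require Import structures.
From mathcomp Require Import all_boot all_order all_algebra.
From mathcomp Require Import all_classical all_reals.
From mathcomp Require Import sequences exp trigo.
From mathcomp Require Import complex.
From mathcomp Require Import ring lra.
Import Order.TTheory GRing.Theory Num.Theory.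
Local Open Scope ring_scope.
Local Open Scope complex_scope.
Set Implicit Arguments. Unset Strict Implicit. Unset Printing Implicit Defensive.
Section Basics.
Variable R : realType.
Local Notation C := R[i].
Local Open Scope ring_scope.

Lemma adjmxE m n (A : 'M[C]_(m,n)) i j : adjmx A i j = (A j i)^*.
Proof. by rewrite /adjmx !mxE. Qed.

Lemma quadE m (A : 'M[C]_m) (v : 'cV[C]_m) :
  (adjmx v *m A *m v) ord0 ord0 =
  \sum_z \sum_w (v z ord0)^* * A z w * v w ord0.
Proof.
rewrite mxE; under eq_bigr => w _ do rewrite mxE big_distrl /=.
rewrite exchange_big /=; apply: eq_bigr => z _; apply: eq_bigr => w _.
by rewrite !mxE.
Qed.

Lemma sum2_delta m (x y : 'I_m) (f : 'I_m -> 'I_m -> C) :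
  (forall z w, (z != x) || (w != y) -> f z w = 0) ->
  \sum_z \sum_w f z w = f x y.
Proof.
move=> H; rewrite (bigD1 x) //= (bigD1 y) //= !big1 ?addr0 //.
- by move=> z zx; rewrite big1 // => w _; apply: H; rewrite zx.
- by move=> w wy; apply: H; rewrite wy orbT.
Qed.

Lemma sum_delta m (x : 'I_m) (f : 'I_m -> C) :
  (forall z, z != x -> f z = 0) -> \sum_z f z = f x.
Proof.
by move=> H; rewrite (bigD1 x) //= big1 ?addr0.
Qed.

Definition evec m (x : 'I_m) : 'cV[C]_m := \col_z (if z == x then 1 else 0).

Lemma evecE m (x z : 'I_m) : evec x z ord0 = if z == x then 1 else 0.
Proof. by rewrite mxE. Qed.

Lemma quad_evec m (A : 'M[C]_m) x :
  (adjmx (evec x) *m A *m evec x) ord0 ord0 = A x x.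
Proof.
rewrite quadE (sum2_delta (x:=x) (y:=x)).
  by rewrite !evecE eqxx conjC1 mul1r mulr1.
move=> z w /orP[] /negbTE h; rewrite !evecE h ?mulr0 //.
by rewrite conjC0 !mul0r.
Qed.

Lemma psd_diag m (A : 'M[C]_m) x : psd A -> 0 <= A x x.
Proof. by move=> [_ /(_ (evec x))]; rewrite quad_evec. Qed.

End Basics.
Arguments evec {R m} x.
Section Schur.
Variable R : realType.
Local Notation C := R[i].
Local Open Scope ring_scope.

Lemma schur_pos m (M T : 'M[C]_m) : psd M ->
  (forall w : 'cV[C]_m, 0 <= \sum_z \sum_y (w z ord0)^* * T z y * w y ord0) ->
  0 <= \sum_z \sum_y M z y * T z y.
Proof.
move=> hM hT.
have hMh : map_mx Num.conj M^T = M by case: hM => h _; rewrite -map_trmx; exact: h.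
have nM : M \is normalmx by apply/normalmxP; rewrite hMh.
have uP := spectral_unitarymx M.
set P := spectralmx M in uP *; set d := spectral_diag M.
have eM : M = invmx P *m diag_mx d *m P by apply/orthomx_spectralP.
rewrite invmx_unitary // in eM.
have PP : P *m map_mx Num.conj P^T = 1%:M by apply/unitarymxP.
have eD : P *m M *m map_mx Num.conj P^T = diag_mx d.
  by rewrite eM !mulmxA PP mul1mx -mulmxA PP mulmx1.
have dE k : d 0 k = \sum_z \sum_y (P k z) * M z y * (P k y)^*.
  have := eD; move/matrixP/(_ k k); rewrite [in RHS]mxE eqxx mulr1n => <-.
  rewrite !mxE; under eq_bigr => y _ do rewrite !mxE big_distrl /=.
  by rewrite exchange_big.
have d_ge0 k : 0 <= d 0 k.
  case: hM => _ /(_ (\col_z (P k z)^*)); rewrite quadE dE.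
  by under eq_bigr => z _ do under eq_bigr => y _ do rewrite !mxE conjCK.
have ME z y : M z y = \sum_k (P k z)^* * d 0 k * P k y.
  rewrite {1}eM mxE; apply: eq_bigr => k _.
  by rewrite mul_mx_diag !mxE.
under eq_bigr => z _ do under eq_bigr => y _ do
  rewrite ME big_distrl /=.
under eq_bigr => z _ do rewrite exchange_big /=.
rewrite exchange_big /=; apply: sumr_ge0 => k _.
have := hT (\col_z P k z).
have -> : \sum_z \sum_y (P k z)^* * d 0 k * P k y * T z y =
   d 0 k * \sum_z \sum_y ((\col_z P k z) z ord0)^* * T z y * (\col_z P k z) y ord0.
  rewrite mulr_sumr; apply: eq_bigr => z _; rewrite mulr_sumr.
  apply: eq_bigr => y _; rewrite !mxE.
  ring.
by move=> h; apply: mulr_ge0.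
Qed.

End Schur.
Section Backward.
Variable R : realType.
Local Notation C := R[i].
Local Open Scope ring_scope.

Lemma bilinE m (A : 'M[C]_m) (u v : 'cV[C]_m) :
  (adjmx u *m A *m v) ord0 ord0 =
  \sum_z \sum_w (u z ord0)^* * A z w * v w ord0.
Proof.
rewrite mxE; under eq_bigr => w _ do rewrite mxE big_distrl /=.
rewrite exchange_big /=; apply: eq_bigr => z _; apply: eq_bigr => w _.
by rewrite !mxE.
Qed.

Lemma exchange4 k m (f : 'I_k -> 'I_k -> 'I_m -> 'I_m -> C) :
  \sum_i \sum_j \sum_z \sum_w f i j z w = \sum_z \sum_w \sum_i \sum_j f i j z w.
Proof.
under eq_bigr => i _ do rewrite exchange_big /=.
under eq_bigr => i _ do under eq_bigr => z _ do rewrite exchange_big /=.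
rewrite exchange_big /=; apply: eq_bigr => z _.
by rewrite exchange_big.
Qed.

Lemma conj_ge0 (x : C) : 0 <= x -> x^* = x.
Proof. by move=> h; apply: conj_Creal; apply: ger0_real. Qed.

Variable m : nat.
Variables (P M : 'M[C]_m).

Definition Emap (X : 'M[C]_m) : 'M[C]_m :=
  \matrix_(z, w) if z == w then \sum_x P z x * X x x else M z w * X z w.

Lemma Emap_linear : linear Emap.
Proof.
move=> a X Y; apply/matrixP => z w; rewrite !mxE.
case: eqP => _.
  rewrite mulr_sumr -big_split /=; apply: eq_bigr => x _; rewrite ?mxE; ring.
by rewrite ?mxE; ring.
Qed.

Lemma Emap_tr (hP : forall x, \sum_y P y x = 1) X : \tr (Emap X) = \tr X.
Proof.
rewrite /mxtrace; under eq_bigr => z _ do rewrite mxE eqxx.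
rewrite exchange_big /=; apply: eq_bigr => x _.
by rewrite -big_distrl /= hP mul1r.
Qed.

Hypothesis hP0 : forall z x, 0 <= P z x.
Hypothesis hM : psd M.
Hypothesis hMP : forall z, M z z = P z z.

Definition P' z x := if x == z then 0 else P z x.

Lemma Emap_split X z w : Emap X z w =
  M z w * X z w + (if z == w then \sum_x P' z x * X x x else 0).
Proof.
rewrite !mxE; case: eqP => [<-|_]; last by rewrite addr0.
rewrite hMP (bigD1 z) //=; congr (_ + _).
rewrite [RHS](bigD1 z) //= /P' eqxx mul0r add0r.
by apply: eq_bigr => x /negbTE ->.
Qed.

Lemma Emap_CP : completely_positive Emap.
Proof.
move=> k X [hXh hXp]; split.
  move=> i j; apply/matrixP => z w; rewrite adjmxE !mxE.
  have hx a b : (X i j a b)^* = X j i b a.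
    by rewrite -adjmxE hXh.
  rewrite eq_sym; case: eqP => [->|_].
    rewrite rmorph_sum; apply: eq_bigr => x _.
    by rewrite rmorphM /= conj_ge0 // hx.
  case: hM => hMh _.
  rewrite rmorphM /= hx; congr (_ * _).
  by rewrite -adjmxE hMh.
move=> v.
pose Tm := \matrix_(z, w) (\sum_i \sum_j (v i z ord0)^* * X i j z w * v j w ord0).
have E1 : \sum_(i < k) \sum_(j < k) (adjmx (v i) *m Emap (X i j) *m v j) ord0 ord0
  = \sum_z \sum_w M z w * Tm z w
  + \sum_z \sum_x P' z x * (\sum_i \sum_j (v i z ord0)^* * X i j x x * v j z ord0).
  under eq_bigr => i _ do under eq_bigr => j _ do rewrite bilinE.
  under eq_bigr => i _ do under eq_bigr => j _ do
    under eq_bigr => z _ do under eq_bigr => w _ do rewrite Emap_split.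
  rewrite exchange4.
  have S1 : \sum_z \sum_w M z w * Tm z w = \sum_z \sum_w \sum_i \sum_j
      (v i z ord0)^* * (M z w * X i j z w) * v j w ord0.
    apply: eq_bigr => z _; apply: eq_bigr => w _; rewrite mxE mulr_sumr.
    apply: eq_bigr => i _; rewrite mulr_sumr; apply: eq_bigr => j _; ring.
  have S2 : \sum_z \sum_x P' z x * (\sum_i \sum_j (v i z ord0)^* * X i j x x * v j z ord0)
    = \sum_z \sum_w \sum_i \sum_j (if z == w then
        (v i z ord0)^* * (\sum_x P' z x * X i j x x) * v j w ord0 else 0).
    apply: eq_bigr => z _; rewrite [RHS](sum_delta (x:=z)); last first.
      move=> w wz; rewrite eq_sym (negbTE wz).
      by rewrite big1 // => i _; rewrite big1.
    rewrite eqxx.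
    under eq_bigr => x _ do rewrite mulr_sumr; rewrite exchange_big /=.
    apply: eq_bigr => i _; under eq_bigr => x _ do rewrite mulr_sumr.
    rewrite exchange_big /=; apply: eq_bigr => j _.
    rewrite mulr_sumr big_distrl /=; apply: eq_bigr => x _; ring.
  rewrite S1 S2 -big_split; apply: eq_bigr => z _; rewrite -big_split.
  apply: eq_bigr => w _; rewrite -big_split; apply: eq_bigr => i _.
  rewrite -big_split; apply: eq_bigr => j _.
  by case: eqP => _ /=; ring.
rewrite E1; apply: addr_ge0.
  apply: schur_pos => // om.
  have <- : \sum_i \sum_j (adjmx (\col_z (om z ord0 * v i z ord0)) *m X i j *m
       (\col_z (om z ord0 * v j z ord0))) ord0 ord0
     = \sum_z \sum_y (om z ord0)^* * Tm z y * om y ord0; last exact: hXp.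
  under eq_bigr => i _ do under eq_bigr => j _ do rewrite bilinE.
  rewrite exchange4; apply: eq_bigr => z _; apply: eq_bigr => y _.
  rewrite mxE mulr_sumr big_distrl /=; apply: eq_bigr => i _.
  rewrite mulr_sumr big_distrl /=; apply: eq_bigr => j _.
  rewrite !mxE rmorphM /=; ring.
apply: sumr_ge0 => z _; apply: sumr_ge0 => x _; apply: mulr_ge0.
  by rewrite /P'; case: eqP.
have := hXp (fun i => v i z ord0 *: evec x).
congr (0 <= _); apply: eq_bigr => i _; apply: eq_bigr => j _.
rewrite bilinE (sum2_delta (x:=x) (y:=x)).
  by rewrite !mxE !eqxx !mulr1.
move=> a b /orP[] /negbTE h; rewrite !mxE h ?mulr0 //.
by rewrite conjC0 !mul0r.
Qed.

End Backward.
Section Cov.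
Variable R : realType.
Local Notation C := R[i].
Local Open Scope ring_scope.
Lemma ev_evi (x : R) : (cos x -i* sin x) * (cos x +i* sin x) = 1 :> C.
Proof.
rewrite /GRing.mul /=; apply/eqP; rewrite eq_complex /=; apply/andP; split; apply/eqP.
  by rewrite mulNr opprK -!expr2 cos2Dsin2.
ring.
Qed.

Lemma evol_conjE m (a : 'I_m -> R) t (X : 'M[C]_m) z w :
  (evol a t *m X *m evol_inv a t) z w =
  (cos (a z * t) -i* sin (a z * t)) * X z w * (cos (a w * t) +i* sin (a w * t)).
Proof.
rewrite mxE (sum_delta (x:=w)); last first.
  by move=> y yw; rewrite [evol_inv _ _ _ _]mxE (negbTE yw) mulr0.
rewrite [evol_inv _ _ _ _]mxE eqxx mxE (sum_delta (x:=z)); last first.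
  by move=> y yz; rewrite [evol _ _ _ _]mxE eq_sym (negbTE yz) mul0r.
by rewrite [evol _ _ _ _]mxE eqxx.
Qed.

Lemma Emap_cov m (P M : 'M[C]_m) a t X :
  Emap P M (evol a t *m X *m evol_inv a t) =
  evol a t *m Emap P M X *m evol_inv a t.
Proof.
apply/matrixP => z w; rewrite [RHS]evol_conjE [LHS]mxE [Emap _ _ _ z w]mxE.
case: eqP => [<-|_].
  under eq_bigr => x _ do rewrite evol_conjE.
  have e := ev_evi (a z * t).
  rewrite mulrC mulrA [_ * (cos _ -i* _)]mulrC e mul1r.
  apply: eq_bigr => x _; rewrite [_ * X x x]mulrC -mulrA ev_evi; ring.
by rewrite evol_conjE; ring.
Qed.
End Cov.
Section BackMain.
Variable R : realType.
Local Notation C := R[i].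
Local Open Scope ring_scope.

Lemma mul_diagvE m (P X : 'M[C]_m) z :
  (P *m diagv X) z ord0 = \sum_x P z x * X x x.
Proof. by rewrite mxE; apply: eq_bigr => x _; rewrite mxE. Qed.

Lemma backward m (a : 'I_m -> R) beta (rho sigma P : 'M[C]_m)
  (hoff : forall x y : 'I_m, x != y -> rho x y != 0) :
  col_stochastic P -> P *m diagv rho = diagv sigma ->
  P *m diagv (gibbs a beta) = diagv (gibbs a beta) ->
  psd (\matrix_(x, y) if x == y then P x x else sigma x y / rho x y) ->
  exists E, GPC a beta E /\ E rho = sigma.
Proof.
move=> [hP0 hP1] hr hg hM.
set Mx := \matrix_(x, y) _ in hM.
have hMP z : Mx z z = P z z by rewrite mxE eqxx.
exists (Emap P Mx); split; last first.
  apply/matrixP => z w; rewrite mxE; case: eqP => [<-|ne].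
    by rewrite -mul_diagvE hr mxE.
  by rewrite mxE (introF eqP ne) mulfVK // hoff //; apply/eqP.
split; [split; [exact: Emap_linear | split; [exact: Emap_CP | exact: Emap_tr]]|].
split; last by move=> t X _; exact: Emap_cov.
apply/matrixP => z w; rewrite mxE; case: eqP => [<-|ne].
  by rewrite -mul_diagvE hg mxE.
by rewrite [gibbs _ _ z w]mxE (introF eqP ne) mulr0.
Qed.
End BackMain.
Section Fwd.
Variable R : realType.
Local Notation C := R[i].
Local Open Scope ring_scope.
Variable m : nat.
Variable E : 'M[C]_m -> 'M[C]_m.
Hypothesis hl : linear E.

Definition EL : {linear 'M[C]_m -> 'M[C]_m} :=
  HB.pack E (GRing.isLinear.Build _ _ _ _ E hl).

Lemma EL_E X : EL X = E X. Proof. by []. Qed.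

Lemma E_expand X : E X = \sum_x \sum_y X x y *: E (delta_mx x y).
Proof.
rewrite -EL_E {1}(matrix_sum_delta X) linear_sum; apply: eq_bigr => x _.
rewrite linear_sum; apply: eq_bigr => y _; by rewrite linearZ.
Qed.
End Fwd.
Section Rank1.
Variable R : realType.
Local Notation C := R[i].
Local Open Scope ring_scope.

Lemma adjmxK m n (A : 'M[C]_(m,n)) : adjmx (adjmx A) = A.
Proof. by apply/matrixP => i j; rewrite !adjmxE conjCK. Qed.

Lemma adjmx_mul m n p (A : 'M[C]_(m,n)) (B : 'M[C]_(n,p)) :
  adjmx (A *m B) = adjmx B *m adjmx A.
Proof.
apply/matrixP => i j; rewrite adjmxE !mxE rmorph_sum; apply: eq_bigr => k _.
by rewrite !adjmxE rmorphM mulrC.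
Qed.

Lemma mx11_mul (A : 'M[C]_(1,1)) (B : 'M[C]_(1,1)) :
  (A *m B) ord0 ord0 = A ord0 ord0 * B ord0 ord0.
Proof. by rewrite mxE big_ord1. Qed.

Lemma rank1_psd m (w : 'cV[C]_m) : psd (w *m adjmx w).
Proof.
split; first by rewrite adjmx_mul adjmxK.
move=> v; rewrite mulmxA -mulmxA mx11_mul.
have -> : (adjmx w *m v) ord0 ord0 = ((adjmx v *m w) ord0 ord0)^*.
  by rewrite -adjmxE adjmx_mul adjmxK.
exact: mul_conjC_ge0.
Qed.

Lemma rank1E m (w : 'cV[C]_m) z y : (w *m adjmx w) z y = w z ord0 * (w y ord0)^*.
Proof. by rewrite mxE big_ord1 adjmxE. Qed.

Lemma psd_scale m (A : 'M[C]_m) (r : C) : 0 <= r -> psd A -> psd (r *: A).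
Proof.
move=> r0 [hh hq]; split.
  by apply/matrixP => z y; rewrite adjmxE !mxE rmorphM /= conj_ge0 // -adjmxE hh.
move=> v; have := hq v; rewrite !quadE => h.
have -> : \sum_z \sum_w (v z ord0)^* * (r *: A) z w * v w ord0 =
  r * \sum_z \sum_w (v z ord0)^* * A z w * v w ord0.
  rewrite mulr_sumr; apply: eq_bigr => z _; rewrite mulr_sumr.
  by apply: eq_bigr => y _; rewrite mxE; ring.
exact: mulr_ge0.
Qed.

Lemma rank1_state m (w : 'cV[C]_m) (s : C) : 0 < s ->
  \sum_z w z ord0 * (w z ord0)^* = s -> is_state (s^-1 *: (w *m adjmx w)).
Proof.
move=> s0 hs; split.
  by apply: psd_scale; [rewrite invr_ge0 ltW | exact: rank1_psd].
rewrite mxtraceZ /mxtrace; under eq_bigr => z _ do rewrite rank1E.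
by rewrite hs mulVf // gt_eqF.
Qed.

End Rank1.
Section Cov2.
Variable R : realType.
Local Notation C := R[i].
Local Open Scope ring_scope.

Lemma conjcE (z : C) : conjc z = Num.conj z. Proof. by []. Qed.

Lemma hi : 'i * 'i = -1 :> C. Proof. by rewrite -expr2 sqrCi. Qed.
Lemma conjCi' : ('i : C)^* = - 'i. Proof. exact: conjCi. Qed.

Lemma rank1_eq m (w : 'cV[C]_m) :
  w *m adjmx w = \matrix_(z, y) (w z ord0 * (w y ord0)^*).
Proof. by apply/matrixP => z y; rewrite rank1E mxE. Qed.

Lemma delta_polar m (x y : 'I_m) : x != y ->
  let w1 := \col_z ((z == x)%:R + (z == y)%:R) : 'cV[C]_m in
  let w2 := \col_z ((z == x)%:R + 'i * (z == y)%:R) : 'cV[C]_m in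
  delta_mx x y = 2^-1 *: (w1 *m adjmx w1) + ('i / 2 *: (w2 *m adjmx w2) +
     (- (1 + 'i) / 2 *: (evec x *m adjmx (evec x)) +
     (- (1 + 'i) / 2 *: (evec y *m adjmx (evec y)) + 0))).
Proof.
move=> xy w1 w2; have yx : y != x by rewrite eq_sym.
have h2 : (2 : C) != 0 by rewrite pnatr_eq0.
rewrite !rank1_eq; apply/matrixP => p q; rewrite !mxE.
case: (eqVneq p x) => [?|px]; case: (eqVneq p y) => [?|py];
case: (eqVneq q x) => [?|qx]; case: (eqVneq q y) => [?|qy]; subst;
try (by rewrite eqxx in xy);
rewrite ?eqxx ?(negbTE xy) ?(negbTE yx) ?(negbTE px) ?(negbTE py) ?(negbTE qx) ?(negbTE qy) /=;
rewrite ?conjcE ?rmorphD ?rmorphM /= ?conjCi ?conjC0 ?conjC1 ?conjC_nat;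
idtac. all: try by []. all: field: hi. all: reflexivity.
Qed.
End Cov2.
Section CovF.
Variable R : realType.
Local Notation C := R[i].
Local Open Scope ring_scope.
Variable m : nat.
Variable E : 'M[C]_m -> 'M[C]_m.
Hypothesis hl : linear E.
Variable a : 'I_m -> R.
Hypothesis hcov : forall (t : R) (rho : 'M[C]_m), is_state rho ->
    E (evol a t *m rho *m evol_inv a t) = evol a t *m E rho *m evol_inv a t.

Definition covp t X :=
  E (evol a t *m X *m evol_inv a t) = evol a t *m E X *m evol_inv a t.

Lemma E0 : E 0 = 0.
Proof. by rewrite -(EL_E hl) linear0. Qed.

Lemma EZ c X : E (c *: X) = c *: E X.
Proof. by rewrite -(EL_E hl) linearZ. Qed.

Lemma covp_lin t c X Y : covp t X -> covp t Y -> covp t (c *: X + Y).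
Proof.
rewrite /covp => hX hY.
rewrite mulmxDr mulmxDl -scalemxAr -scalemxAl hl [LHS]hl hX hY.
by rewrite mulmxDr mulmxDl -scalemxAr -scalemxAl.
Qed.

Lemma covp0 t : covp t 0.
Proof. by rewrite /covp mulmx0 mul0mx E0 mulmx0 mul0mx. Qed.

Lemma covp_rank1 t (w : 'cV[C]_m) s : 0 < s ->
  \sum_z w z ord0 * (w z ord0)^* = s -> covp t (w *m adjmx w).
Proof.
move=> s0 hs.
have := covp_lin s (hcov t (rank1_state s0 hs)) (covp0 t).
by rewrite addr0 scalerA mulfV ?gt_eqF // scale1r.
Qed.

Lemma sum_two (x y : 'I_m) (f : 'I_m -> C) : x != y ->
  (forall z, z != x -> z != y -> f z = 0) -> \sum_z f z = f x + f y.
Proof.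
move=> xy h; rewrite (bigD1 x) //= (bigD1 y) /=; last by rewrite eq_sym.
by rewrite big1 ?addr0 // => z /andP[zx zy]; apply: h.
Qed.

Lemma covp_evec t x : covp t (evec x *m adjmx (evec x)).
Proof.
apply: (@covp_rank1 t _ 1) => //.
rewrite (sum_delta (x:=x)); first by rewrite evecE eqxx ?conjcE conjC1 mulr1.
by move=> z zx; rewrite evecE (negbTE zx) mul0r.
Qed.

Lemma covp_delta t x y : covp t (delta_mx x y).
Proof.
case: (eqVneq x y) => [<-|xy].
  have -> : delta_mx x x = evec x *m adjmx (evec x) :> 'M[C]_m.
    apply/matrixP => p q; rewrite rank1E !mxE ?conjcE.
    by case: (p == x); case: (q == x); rewrite ?conjC1 ?conjC0 ?mulr1 ?mulr0.
  exact: covp_evec.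
have yx : y != x by rewrite eq_sym.
rewrite (delta_polar R xy).
apply: covp_lin; last apply: covp_lin; last apply: covp_lin;
  last apply: covp_lin; last exact: covp0.
- apply: (@covp_rank1 t _ 2); first by rewrite ltr0n.
  rewrite (sum_two xy).
    rewrite !mxE !eqxx (negbTE xy) (negbTE yx) ?conjcE /= ?rmorphD /= ?conjC1 ?conjC0.
    by rewrite ?rmorph_nat; field.
  by move=> z zx zy; rewrite !mxE (negbTE zx) (negbTE zy) add0r mul0r.
- apply: (@covp_rank1 t _ 2); first by rewrite ltr0n.
  rewrite (sum_two xy).
    rewrite !mxE !eqxx (negbTE xy) (negbTE yx) ?conjcE /= ?rmorphD ?rmorphM /= ?conjC1 ?conjC0 ?conjCi.
    by rewrite ?rmorph_nat; field: (hi R).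
  by move=> z zx zy; rewrite !mxE (negbTE zx) (negbTE zy) mulr0 add0r mul0r.
- exact: covp_evec.
- exact: covp_evec.
Qed.

End CovF.
Section Phase.
Variable R : realType.
Local Notation C := R[i].
Local Open Scope ring_scope.

Lemma ev_mul (p q : R) : (cos p -i* sin p) * (cos q +i* sin q) =
   cos (p - q) -i* sin (p - q) :> C.
Proof.
rewrite /GRing.mul /=; apply/eqP; rewrite eq_complex /= cosB sinB.
by apply/andP; split; apply/eqP; ring.
Qed.

Lemma phase_eq (d1 d2 : R) :
  (forall t, cos (d1 * t) -i* sin (d1 * t) = cos (d2 * t) -i* sin (d2 * t) :> C) ->
  d1 = d2.
Proof.
move=> h; apply/eqP; apply/negPn/negP => ne.
have ne' : d1 - d2 != 0 by rewrite subr_eq0.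
set t := pi / (d1 - d2).
have e : d1 * t = d2 * t + pi by rewrite /t; field.
case: (h t) => hc hs.
rewrite e cosDpi in hc; rewrite e sinDpi in hs.
have c0 : cos (d2 * t) = 0 by lra.
have s0 : sin (d2 * t) = 0 by lra.
have := cos2Dsin2 (d2 * t); rewrite c0 s0 !expr2 !mul0r addr0 => /eqP.
by rewrite eq_sym oner_eq0.
Qed.
End Phase.
Section Supp.
Variable R : realType.
Local Notation C := R[i].
Local Open Scope ring_scope.
Variable m : nat.
Variable E : 'M[C]_m -> 'M[C]_m.
Hypothesis hl : linear E.
Variable a : 'I_m -> R.
Hypothesis hcov : forall (t : R) (rho : 'M[C]_m), is_state rho ->
    E (evol a t *m rho *m evol_inv a t) = evol a t *m E rho *m evol_inv a t.
Hypothesis hbohr : nondeg_bohr a.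

Lemma F_supp x y z w : E (delta_mx x y) z w != 0 ->
  (x = z /\ y = w) \/ (x = y /\ z = w).
Proof.
move=> nz; apply: (proj1 (hbohr x y z w)).
apply: phase_eq => t.
have hc := covp_delta hl hcov t x y.
have eU : evol a t *m delta_mx x y *m evol_inv a t =
    ((cos (a x * t) -i* sin (a x * t)) * (cos (a y * t) +i* sin (a y * t))) *: delta_mx x y.
  apply/matrixP => p q; rewrite evol_conjE !mxE.
  case: (eqVneq p x) => [->|px]; case: (eqVneq q y) => [->|qy];
  by rewrite ?eqxx ?(negbTE px) ?(negbTE qy) /= ?andbF; ring.
rewrite /covp eU (EZ hl) in hc.
move/matrixP/(_ z w): hc; rewrite evol_conjE !mxE => h.
have : (cos (a x * t) -i* sin (a x * t)) * (cos (a y * t) +i* sin (a y * t)) =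
       (cos (a z * t) -i* sin (a z * t)) * (cos (a w * t) +i* sin (a w * t)).
  by apply: (mulIf nz); rewrite h; ring.
by rewrite !ev_mul -!mulrBl.
Qed.
End Supp.
Section Forward.
Variable R : realType.
Local Notation C := R[i].
Local Open Scope ring_scope.

Lemma choi_psd m : block_psd (fun i j : 'I_m => delta_mx i j : 'M[C]_m).
Proof.
split.
  move=> i j; apply/matrixP => p q; rewrite adjmxE !mxE ?conjcE.
  by rewrite conjC_nat andbC.
move=> v.
have -> : \sum_i \sum_j (adjmx (v i) *m delta_mx i j *m v j) ord0 ord0 =
   (\sum_i v i i ord0)^* * (\sum_j v j j ord0).
  rewrite rmorph_sum big_distrl /=; apply: eq_bigr => i _.
  rewrite mulr_sumr; apply: eq_bigr => j _.
  rewrite bilinE (sum2_delta (x:=i) (y:=j)); first by rewrite mxE !eqxx mulr1.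
  by move=> z w /orP[] /negbTE h; rewrite mxE h ?andbF /= ?mulr0n mulr0 mul0r.
by have := mul_conjC_ge0 (\sum_j v j j ord0); rewrite mulrC.
Qed.

Variable m : nat.
Variable a : 'I_m -> R.
Variable beta : R.
Hypothesis hbohr : nondeg_bohr a.

Lemma forward (rho sigma : 'M[C]_m)
  (hoff : forall x y : 'I_m, x != y -> rho x y != 0) E :
  GPC a beta E -> E rho = sigma ->
  exists P : 'M[C]_m,
     [/\ col_stochastic P,
         P *m diagv rho = diagv sigma,
         P *m diagv (gibbs a beta) = diagv (gibbs a beta) &
         psd (\matrix_(x, y) if x == y then P x x else sigma x y / rho x y)].
Proof.
move=> [[hl [hcp htp]] [hg hcov]] hE.
pose F x y := E (delta_mx x y).
have Ediag X y : E X y y = \sum_x X x x * F x x y y.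
  rewrite (E_expand hl) summxE; apply: eq_bigr => x _.
  rewrite summxE (sum_delta (x:=x)); first by rewrite mxE.
  move=> y' yx; rewrite mxE.
  case: (eqVneq (F x y' y y) 0) => [->|nz]; first by rewrite mulr0.
  by case: (F_supp hl hcov hbohr nz) => [[e1 e2]|[e1 _]]; move: yx; rewrite ?e1 ?e2 eqxx.
have Eoff X x y : x != y -> E X x y = X x y * F x y x y.
  move=> xy; rewrite (E_expand hl) summxE.
  under eq_bigr => ? _ do rewrite summxE.
  rewrite (sum2_delta (x:=x) (y:=y)).
    by rewrite mxE.
  move=> x' y' h; rewrite mxE.
  case: (eqVneq (F x' y' x y) 0) => [->|nz]; first by rewrite mulr0.
  case: (F_supp hl hcov hbohr nz) => [[ex ey]|[_ exy]].
    by move: h; rewrite ex ey !eqxx.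
  by move: xy; rewrite exy eqxx.
have hC : block_psd (fun i j : 'I_m => F i j) := hcp m _ (choi_psd m).
case: hC => hFh hFp.
pose P := \matrix_(y, x) F x x y y.
exists P; split.
- split.
    move=> y x; rewrite mxE.
    have := hFp (fun i => if i == x then evec y else 0).
    rewrite (sum2_delta (x:=x) (y:=x)); first by rewrite eqxx quad_evec.
    move=> i j h; rewrite bilinE big1 // => z _; rewrite big1 // => w _.
    by case/orP: h => /negbTE ->; rewrite mxE ?conjC0 ?mul0r ?mulr0 //.
  move=> x; under eq_bigr => y _ do rewrite mxE.
  have := htp (delta_mx x x); rewrite /mxtrace => ->; rewrite (sum_delta (x:=x)); first by rewrite mxE !eqxx.
  by move=> z zx; rewrite mxE (negbTE zx).
- apply/matrixP => y j; rewrite (ord1 j) mul_diagvE [RHS]mxE -hE Ediag.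
  by apply: eq_bigr => x _; rewrite mxE mulrC.
- apply/matrixP => y j; rewrite (ord1 j) mul_diagvE [RHS]mxE -{2}hg Ediag.
  by apply: eq_bigr => x _; rewrite mxE mulrC.
have -> : (\matrix_(x, y) if x == y then P x x else sigma x y / rho x y) =
   \matrix_(x, y) F x y x y.
  apply/matrixP => x y; rewrite !mxE; case: eqP => [->|/eqP xy] //.
  by rewrite -hE Eoff // mulrC mulKf // hoff.
split.
  apply/matrixP => x y; rewrite adjmxE !mxE -adjmxE.
  by rewrite /F hFh.
move=> v; rewrite quadE.
have := hFp (fun i => v i ord0 *: evec i).
congr (0 <= _); apply: eq_bigr => i _; apply: eq_bigr => j _.
rewrite bilinE (sum2_delta (x:=i) (y:=j)).
  by rewrite !mxE !eqxx !mulr1.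
move=> z w /orP[] /negbTE h; rewrite !mxE h ?mulr0 //.
by rewrite ?conjcE conjC0 !mul0r.
Qed.
End Forward.
Unset Implicit Arguments.
Local Open Scope ring_scope.
Local Open Scope complex_scope.

Theorem lemma5 (R : realType) (m : nat) (a : 'I_m -> R) (beta : R)
  (hbeta : 0 < beta) (hbohr : nondeg_bohr a)
  (rho sigma : 'M[R[i]]_m) (hrho : is_state rho) (hsigma : is_state sigma)
  (hoff : forall x y : 'I_m, x != y -> rho x y != 0) :
  (exists E : 'M[R[i]]_m -> 'M[R[i]]_m, GPC a beta E /\ E rho = sigma) <->
  (exists P : 'M[R[i]]_m,
     [/\ col_stochastic P,
         P *m diagv rho = diagv sigma,
         P *m diagv (gibbs a beta) = diagv (gibbs a beta) &
         psd (\matrix_(x, y) if x == y then P x x else sigma x y / rho x y)]).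
Proof.
split.
  by case=> E [hE1 hE2]; exact: (forward hbohr hoff hE1 hE2).
by case=> P [h1 h2 h3 h4]; exact: (backward hoff h1 h2 h3 h4).
Qed.
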